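(* Assume $\mathbf X$ is uniformly distributed on $[0,1]^d$ and $\|Y\|_\infty<\infty$. Assume $K_n,\gamma_1,\gamma_2\to\infty$ with $K_n^2e^{-2\gamma_2}\to0$ and $K_n^4\gamma_2^2\log(\gamma_1)/\gamma_1\to0$. Then $$\mathbb E\int_{[0,1]^d}\big|f_{\lambda^\star}(\mathbf x)-t_{\lambda^\star}(\mathbf x)\big|^2\mu(d\mathbf x)\to0\qquad(n\to\infty).$$
   Context: $(\mathbf X,Y)$ random pair, $\mu$ the law of $\mathbf X$, $\mathscr D_n$ an i.i.d. sample of copies of $(\mathbf X,Y)$ and $\Theta$ an independent randomization. The tree is a randomized CART tree with $K_n$ leaves $L_1,\dots,L_{K_n}$ built from $\Theta$ and $\mathscr D_n$ (axis-aligned binary splits; root $[0,1]^d$; a node with cell $A$ and split $(j,\alpha)$ has left child $\{\mathbf x\in A:x^{(j)}<\alpha\}$ and right child $\{\mathbf x\in A:x^{(j)}\ge\alpha\}$); its $K_n-1$ internal splits are $(j_k,\alpha_k)$. The parameter $\lambda^\star=(\mathbf W_1^\star,\mathbf b_1^\star,\mathbf W_2^\star,\mathbf b_2^\star,\mathbf W_{\rm out}^\star,b^\star_{\rm out})$ is: $\mathbf W_1^\star\in\mathbb R^{d\times(K_n-1)}$ with column $k$ equal to the $j_k$-th unit vector, $(\mathbf b_1^\star)_k=-\alpha_k$; $(\mathbf W_2^\star)_{k,k'}=+1$ (resp. $-1$) if split $k$ is on the root-to-$L_{k'}$ path and that path goes to its right (resp. left) child, $0$ if split $k$ is not on that path;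 $(\mathbf b_2^\star)_{k'}=-\ell(k')+\frac12$ with $\ell(k')$ the depth of $L_{k'}$; $(\mathbf W^\star_{\rm out})_{k'}=\frac12\mathbb E[Y\mid\mathbf X\in L_{k'}]$; $b^\star_{\rm out}=\frac12\sum_{k'}\mathbb E[Y\mid\mathbf X\in L_{k'}]$ (conditional expectations given the tree). With $\tau(u)=2\mathbf 1_{u\ge0}-1$ and $\sigma_i(u)=\tanh(\gamma_iu)$ entrywise, $t_{\lambda^\star}(\mathbf x)=\mathbf W^{\star\top}_{\rm out}\tau(\mathbf W_2^{\star\top}\tau(\mathbf W_1^{\star\top}\mathbf x+\mathbf b_1^\star)+\mathbf b_2^\star)+b^\star_{\rm out}$ and $f_{\lambda^\star}(\mathbf x)=\mathbf W^{\star\top}_{\rm out}\sigma_2(\mathbf W_2^{\star\top}\sigma_1(\mathbf W_1^{\star\top}\mathbf x+\mathbf b_1^\star)+\mathbf b_2^\star)+b^\star_{\rm out}$. The outer expectation is over $\Theta$ and $\mathscr D_n$. *)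

(* Defs.v *)
From HB Require Import structures.
From mathcomp Require Import all_boot all_order all_algebra.
From mathcomp Require Import all_classical all_reals all_analysis measurable_realfun.
Set Implicit Arguments. Unset Strict Implicit. Unset Printing Implicit Defensive.
Import Order.TTheory GRing.Theory Num.Theory.
Local Open Scope classical_set_scope.
Local Open Scope ring_scope.

(** Axis-aligned binary trees on [0,1]^d: a node carries a split (j, alpha). *)
Inductive tree (d : nat) (R : Type) :=
| Leaf
| Node of 'I_d & R & tree d R & tree d R.
Arguments Leaf {d R}.

Section Tree.
Variables (d : nat) (R : realType).

Fixpoint splits (t : tree d R) : seq ('I_d * R) :=
  match t with
  | Leaf => [::]
  | Node j a l r => (j, a) :: splits l ++ splits r
  end.

(** For each leaf (in preorder), its root-to-leaf path: a list of
   ((k, (j_k, alpha_k)), went_right) where k is the index of the split in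
   [splits t] (offset [off] for the current subtree). *)
Fixpoint lpaths (t : tree d R) (off : nat) : seq (seq ((nat * ('I_d * R)) * bool)) :=
  match t with
  | Leaf => [:: [::]]
  | Node j a l r =>
      [seq ((off, (j, a)), false) :: p | p <- lpaths l off.+1] ++
      [seq ((off, (j, a)), true) :: p | p <- lpaths r (off.+1 + size (splits l))]
  end.

Definition leaf_paths (t : tree d R) := lpaths t 0.
Definition nleaves (t : tree d R) : nat := size (leaf_paths t).
Definition nsplits (t : tree d R) : nat := size (splits t).

Definition split_of (t : tree d R) (k : 'I_(nsplits t)) : 'I_d * R :=
  tnth (in_tuple (splits t)) k.
Definition path_of (t : tree d R) (k' : 'I_(nleaves t)) :=
  tnth (in_tuple (leaf_paths t)) k'.

Definition cube01 : set (d.-tuple R) := [set x | forall i, 0 <= tnth x i <= 1].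

Definition leaf_cell (t : tree d R) (k' : 'I_(nleaves t)) : set (d.-tuple R) :=
  [set x | cube01 x /\
     forall e, e \in @path_of t k' ->
       if e.2 then e.1.2.2 <= tnth x e.1.2.1 else tnth x e.1.2.1 < e.1.2.2].

Definition depth (t : tree d R) (k' : 'I_(nleaves t)) : nat := size (@path_of t k').

Definition W1s (t : tree d R) : 'M[R]_(d, nsplits t) :=
  \matrix_(i < d, k < nsplits t) (i == (@split_of t k).1)%:R.
Definition b1s (t : tree d R) : 'cV[R]_(nsplits t) :=
  \col_(k < nsplits t) - (@split_of t k).2.
Definition W2s (t : tree d R) : 'M[R]_(nsplits t, nleaves t) :=
  \matrix_(k < nsplits t, k' < nleaves t)
    (if has (fun e => (e.1.1 == val k) && e.2) (@path_of t k') then 1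
     else if has (fun e => (e.1.1 == val k) && ~~ e.2) (@path_of t k') then -1
     else 0).
Definition b2s (t : tree d R) : 'cV[R]_(nleaves t) :=
  \col_(k' < nleaves t) (- (@depth t k')%:R + 2^-1).
Definition Wouts (t : tree d R) (c : 'I_(nleaves t) -> R) : 'cV[R]_(nleaves t) :=
  \col_(k' < nleaves t) (2^-1 * c k').
Definition bouts (t : tree d R) (c : 'I_(nleaves t) -> R) : R :=
  2^-1 * \sum_(k' < nleaves t) c k'.

Definition tau (u : R) : R := 2 * (((0 <= u)%R : bool) : nat)%:R - 1.
Definition tanhR (u : R) : R := (expR u - expR (- u)) / (expR u + expR (- u)).
Definition sigma (g : R) (u : R) : R := tanhR (g * u).

Definition colvec (x : d.-tuple R) : 'cV[R]_d := \col_(i < d) tnth x i.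

Definition net (m K : nat) (act1 act2 : R -> R) (W1 : 'M[R]_(d, m)) (b1 : 'cV[R]_m)
  (W2 : 'M[R]_(m, K)) (b2 : 'cV[R]_K) (Wout : 'cV[R]_K) (bout : R)
  (x : d.-tuple R) : R :=
  (Wout^T *m map_mx act2 (W2^T *m map_mx act1 (W1^T *m colvec x + b1) + b2)) 0 0
  + bout.

Definition t_star (t : tree d R) (c : 'I_(nleaves t) -> R) (x : d.-tuple R) : R :=
  net tau tau (W1s t) (b1s t) (W2s t) (b2s t) (Wouts c) (bouts c) x.
Definition f_star (g1 g2 : R) (t : tree d R) (c : 'I_(nleaves t) -> R)
  (x : d.-tuple R) : R :=
  net (sigma g1) (sigma g2) (W1s t) (b1s t) (W2s t) (b2s t) (Wouts c) (bouts c) x.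

End Tree.

Section Prob.
Local Open Scope ereal_scope.
Context {dO : measure_display} {O : measurableType dO} {R : realType}.

(** elementary conditional expectation E[Y | A] = E[Y 1_A] / P(A)
   (equal to 0 when P(A) = 0, by the convention x / 0 = 0) *)
Definition cond_exp (P : probability O R) (Y : O -> R) (A : set O) : R :=
  (fine (\int[P]_(w in A) (Y w)%:E) / fine (P A))%R.

Definition uniform_cube (d : nat) (P : probability O R) (X : O -> d.-tuple R) : Prop :=
  forall a b : d.-tuple R,
    (forall i, (0 <= tnth a i)%R /\ (tnth a i <= tnth b i)%R /\ (tnth b i <= 1)%R) ->
    P (X @^-1` [set x | forall i, (tnth a i <= tnth x i <= tnth b i)%R])
    = (\prod_(i < d) (tnth b i - tnth a i))%:E.

Definition ess_bounded (P : probability O R) (Y : O -> R) : Prop :=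
  exists M : R, {ae P, forall w, (`|Y w| <= M)%R}.
End Prob.

(** leaf values E[Y | X in L_k'] (tree fixed, (X,Y) an independent copy) *)
Definition leaf_values {dO : measure_display} {O : measurableType dO} {R : realType}
  (d : nat) (P : probability O R) (X : O -> d.-tuple R) (Y : O -> R)
  (t : tree d R) : 'I_(nleaves t) -> R :=
  fun k' => cond_exp P Y (X @^-1` leaf_cell k').
Arguments leaf_values {dO O R d} P X Y t k'.

(* Main.v *)
Require Import Defs.
From HB Require Import structures.
From mathcomp Require Import all_boot all_order all_algebra.
From mathcomp Require Import all_classical all_reals all_analysis measurable_realfun.
From mathcomp Require Import ring lra.
Import Order.TTheory GRing.Theory Num.Theory.
Local Open Scope classical_set_scope.
Local Open Scope ring_scope.

Section RealFacts.
Variable R : realType.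
Implicit Types u y g z w : R.

Lemma tauE u : tau u = if 0 <= u then 1 else -1.
Proof. by rewrite /tau; case: ifP => _ /=; rewrite ?mulr1 ?mulr0; lra. Qed.

Lemma tanhRN y : tanhR (- y) = - tanhR y.
Proof.
rewrite /tanhR opprK -mulNr; congr (_ / _); first by rewrite opprB.
by rewrite addrC.
Qed.

Lemma tanh_1 y : 0 <= 1 - tanhR y <= 2 * expR (- (2 * y)).
Proof.
rewrite /tanhR.
have a0 := expR_gt0 y; have b0 := expR_gt0 (- y).
have ab : expR y * expR (- y) = 1 by rewrite -expRD subrr expR0.
have e2 : expR (- (2 * y)) = expR (- y) * expR (- y).
  by rewrite -expRD; congr expR; lra.
set a := expR y in a0 ab *; set b := expR (- y) in b0 ab e2 *.
rewrite e2.
have -> : 1 - (a - b) / (a + b) = 2 * b / (a + b).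
  by field; apply/lt0r_neq0; lra.
apply/andP; split; first by apply: divr_ge0; lra.
rewrite ler_pdivrMr; last lra.
nra.
Qed.

Lemma tanh_le1 y : `|tanhR y| <= 1.
Proof.
rewrite /tanhR.
have a0 := expR_gt0 y; have b0 := expR_gt0 (- y).
set a := expR y in a0 *; set b := expR (- y) in b0 *.
rewrite normrM normfV (gtr0_norm (_ : 0 < a + b)); last lra.
rewrite ler_pdivrMr; last lra.
rewrite mul1r ler_norml; apply/andP; split; lra.
Qed.

Lemma sig_tau g u dl : 0 < g -> dl <= `|u| ->
  `|tanhR (g * u) - tau u| <= 2 * expR (- (2 * g * dl)).
Proof.
move=> g0 du; rewrite tauE; case: ifP => u0.
  have /andP[h1 h2] := tanh_1 (g * u).
  rewrite distrC ger0_norm //; apply: (le_trans h2).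
  rewrite ler_pM2l // ler_expR lerN2 -mulrA ler_pM2l // ler_pM2l //.
  by rewrite -(ger0_norm u0).
have un : u < 0 by rewrite ltNge u0.
have /andP[h1 h2] := tanh_1 (g * - u).
have -> : tanhR (g * u) - -1 = 1 - tanhR (g * - u).
  by rewrite mulrN tanhRN; lra.
rewrite ger0_norm //; apply: (le_trans h2).
rewrite ler_pM2l // ler_expR lerN2 -mulrA ler_pM2l // ler_pM2l //.
by rewrite -(ltr0_norm un).
Qed.

Lemma tau_norm u : `|tau u| = 1.
Proof. by rewrite tauE; case: ifP => _; rewrite ?normrN normr1. Qed.

End RealFacts.

Section Net.
Variables (d : nat) (R : realType).

Lemma netE m K (act1 act2 : R -> R) (W1 : 'M[R]_(d, m)) (b1 : 'cV[R]_m)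
  (W2 : 'M[R]_(m, K)) (b2 : 'cV[R]_K) (Wout : 'cV[R]_K) (bout : R) x :
  net act1 act2 W1 b1 W2 b2 Wout bout x =
  \sum_(k' < K) Wout k' 0 * act2 (\sum_(k < m) W2 k k' *
     act1 ((W1^T *m colvec x + b1) k 0) + b2 k' 0) + bout.
Proof.
rewrite /net !mxE; congr (_ + _); apply: eq_bigr => k' _.
idtac.
idtac.
rewrite /map_mx /trmx !mxE; congr (_ * act2 (_ + _)); apply: eq_bigr => k _.
by rewrite !mxE.
Qed.

Lemma uE (t : tree d R) x (k : 'I_(nsplits t)) :
  ((W1s t)^T *m colvec x + b1s t) k 0 =
  tnth x (split_of k).1 - (split_of k).2.
Proof.
rewrite !mxE; congr (_ + _).
rewrite (bigD1 (split_of k).1) //= !mxE eqxx mul1r big1 ?addr0 //.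
by move=> i /negbTE ne; rewrite !mxE ne mul0r.
Qed.

Definition zz (t : tree d R) (a : R -> R) x (k' : 'I_(nleaves t)) :=
  \sum_(k < nsplits t) W2s t k k' * a (tnth x (split_of k).1 - (split_of k).2)
  + b2s t k' 0.

Lemma net_diff (t : tree d R) (c : 'I_(nleaves t) -> R) g1 g2 x :
  f_star g1 g2 c x - t_star c x =
  \sum_(k' < nleaves t) (2^-1 * c k') *
     (sigma g2 (zz t (sigma g1) x k') - tau (zz t (@tau R) x k')).
Proof.
rewrite /f_star /t_star !netE opprD addrACA subrr addr0 -sumrB; apply: eq_bigr => k' _.
rewrite /Wouts mxE -mulrBr /zz.
have E (a : R -> R) : \sum_(k < nsplits t) W2s t k k' * a (((W1s t)^T *m colvec x + b1s t) k 0)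
  = \sum_(k < nsplits t) W2s t k k' * a (tnth x (split_of k).1 - (split_of k).2).
  by apply: eq_bigr => k _; rewrite uE.
by rewrite !E.
Qed.

End Net.
Arguments zz {d R} t a x k'.

Section S.
Variables (d : nat) (R : realType).
Definition isint (y : R) := exists z : int, y = z%:~R.
Lemma isint_add a b : isint a -> isint b -> isint (a + b).
Proof. by move=> [z1 ->] [z2 ->]; exists (z1 + z2); rewrite intrD. Qed.
Lemma isint_mul a b : isint a -> isint b -> isint (a * b).
Proof. by move=> [z1 ->] [z2 ->]; exists (z1 * z2); rewrite intrM. Qed.
Lemma half_le (z : int) : 2^-1 <= `|z%:~R + 2^-1 : R|.
Proof.
case: (lerP 0 z) => hz.
  have h : (0 : R) <= z%:~R by rewrite ler0z.
  rewrite ger0_norm; lra.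
have h : (z%:~R : R) <= -1.
  have : z <= -1 by rewrite -ltzD1 addrC subrr.
  by rewrite -(ler_int R).
rewrite ltr0_norm; lra.
Qed.
Lemma W2s_int (t : tree d R) k k' : isint (W2s t k k') /\ `|W2s t k k'| <= 1.
Proof.
rewrite mxE; case: ifP => _; first by split; [exists 1|rewrite normr1].
case: ifP => _; first by split; [exists (-1); rewrite ?mulrN1z|rewrite normrN normr1].
by split; [exists 0|rewrite normr0].
Qed.
End S.
Arguments isint {R} y.
Arguments W2s_int {d R} t k k'.
Arguments half_le {R} z.

Section S.
Variables (d : nat) (R : realType).

Lemma zz_tau (t : tree d R) x k' : 2^-1 <= `|zz t (@tau R) x k'|.
Proof.
rewrite /zz mxE.
have : isint (\sum_(k < nsplits t) W2s t k k' *
   tau (tnth x (split_of k).1 - (split_of k).2)).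
  apply: (big_ind (@isint R)); [by exists 0|exact: isint_add|].
  move=> k _; apply: isint_mul; first by case: (W2s_int t k k').
  by rewrite tauE; case: ifP => _; [exists 1|exists (-1); rewrite mulrN1z].
move=> [z ->].
have -> : z%:~R + (- (depth k')%:R + 2^-1) = (z - (depth k')%:Z)%:~R + 2^-1 :> R.
  by rewrite intrD intrN addrA.
exact: half_le.
Qed.

Lemma zz_diff (t : tree d R) x k' (g e : R) :
  (forall k : 'I_(nsplits t), `|sigma g (tnth x (split_of k).1 - (split_of k).2)
        - tau (tnth x (split_of k).1 - (split_of k).2)| <= e) ->
  `|zz t (sigma g) x k' - zz t (@tau R) x k'| <= (nsplits t)%:R * e.
Proof.
move=> he; rewrite /zz opprD addrACA subrr addr0 -sumrB.
apply: (le_trans (ler_norm_sum _ _ _)).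
have -> : (nsplits t)%:R * e = \sum_(k < nsplits t) e by rewrite sumr_const card_ord mulr_natl.
apply: ler_sum => k _.
rewrite -mulrBr normrM; have [_ h1] := W2s_int t k k'.
rewrite -[e]mul1r; apply: ler_pM => //.
Qed.

Lemma second_layer (g z z' r : R) : 0 < g -> 2^-1 <= `|z'| -> `|z - z'| <= r ->
  r <= 4^-1 -> `|sigma g z - tau z'| <= 2 * expR (- (2 * g * (2^-1 - r))).
Proof.
move=> g0 hz' hzz hr.
have -> : tau z' = tau z.
  rewrite !tauE; move: hz' hzz; rewrite !ler_norml => h1 /andP[h2 h3].
  case: (lerP 0 z') => a; case: (lerP 0 z) => b //.
    by move: h1; rewrite (ger0_norm a); lra.
  by move: h1; rewrite (ltr0_norm a); lra.
apply: sig_tau => //.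
move: hzz; rewrite ler_norml => /andP[h2 h3].
case: (lerP 0 z') => a; case: (lerP 0 z) => b.
- by rewrite (ger0_norm a) in hz'; rewrite (ger0_norm b); lra.
- by rewrite (ger0_norm a) in hz'; rewrite (ltr0_norm b); lra.
- by rewrite (ltr0_norm a) in hz'; rewrite (ger0_norm b); lra.
- by rewrite (ltr0_norm a) in hz'; rewrite (ltr0_norm b); lra.
Qed.
End S.

Section S.
Variables (d : nat) (R : realType).

Definition slabs (t : tree d R) (dl : R) : set (d.-tuple R) :=
  [set x | exists k : 'I_(nsplits t),
     `|tnth x (split_of k).1 - (split_of k).2| < dl].

Lemma sum_bound (t : tree d R) (c : 'I_(nleaves t) -> R) (a : 'I_(nleaves t) -> R) (M B : R) :
  (forall k', `|c k'| <= M) -> (forall k', `|a k'| <= 2 * B) ->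
  `|\sum_(k' < nleaves t) (2^-1 * c k') * a k'| <= (nleaves t)%:R * M * B.
Proof.
move=> hc ha; apply: (le_trans (ler_norm_sum _ _ _)).
have -> : (nleaves t)%:R * M * B = \sum_(k' < nleaves t) (M * B).
  by rewrite sumr_const card_ord -mulrA mulr_natl.
apply: ler_sum => k' _; rewrite !normrM.
have h1 := hc k'; have h2 := ha k'.
have n0 : 0 <= `|c k'| by [].
have n1 : 0 <= `|a k'| by [].
rewrite (ger0_norm (_ : 0 <= 2^-1)); last lra.
nra.
Qed.

Lemma pointwise (t : tree d R) (c : 'I_(nleaves t) -> R) (M g1 g2 dl : R) x :
  0 <= M -> (forall k', `|c k'| <= M) -> 0 < g1 -> 0 < g2 ->
  (nsplits t)%:R * (2 * expR (- (2 * g1 * dl))) <= 4^-1 ->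
  (f_star g1 g2 c x - t_star c x) ^+ 2 <=
    ((nleaves t)%:R * M) ^+ 2 * \1_(slabs t dl) x +
    ((nleaves t)%:R * M * expR (- (2 * g2 *
        (2^-1 - (nsplits t)%:R * (2 * expR (- (2 * g1 * dl))))))) ^+ 2.
Proof.
move=> M0 hc g10 g20 hr.
rewrite net_diff.
set v := \sum_(k' < _) _.
have sq : forall B, 0 <= B -> `|v| <= B -> v ^+ 2 <= B ^+ 2.
  move=> B B0; rewrite ler_norml => /andP[h1 h2]; nra.
have K0 : 0 <= (nleaves t)%:R * M by apply: mulr_ge0.
have E0 : forall y : R, 0 <= ((nleaves t)%:R * M * expR y) ^+ 2 by move=> y; apply: sqr_ge0.
rewrite /indic; case: (boolP (x \in slabs t dl)) => hx.
  rewrite mulr1; apply: ler_wpDr => //; apply: sq => //.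
  rewrite -[X in _ <= X]mulr1; apply: sum_bound => // k'.
  apply: (le_trans (ler_normB _ _)); rewrite /sigma tau_norm mulr1.
  by have := @tanh_le1 R (g2 * zz t (sigma g1) x k'); lra.
rewrite mulr0 add0r; apply: sq; first by apply: mulr_ge0 => //; apply: ltW; apply: expR_gt0.
apply: sum_bound => // k'.
apply: second_layer => //; first exact: zz_tau.
apply: zz_diff => k.
apply: sig_tau => //.
rewrite leNgt; apply/negP => hlt; move: hx => /negP; apply.
by rewrite inE; exists k.
Qed.
End S.
Arguments slabs {d R} t dl.

Section H6sec.
Local Open Scope ereal_scope.

Lemma le_integral_nm (dT : measure_display) (T : measurableType dT) (R : realType)
  (mu : {measure set T -> \bar R}) (D : set T) (f1 f2 : T -> \bar R) :
  (forall x, D x -> 0 <= f1 x) -> (forall x, D x -> f1 x <= f2 x) ->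
  \int[mu]_(x in D) f1 x <= \int[mu]_(x in D) f2 x.
Proof.
move=> f10 f12.
have f20 : forall x, D x -> 0 <= f2 x by move=> x Dx; exact: le_trans (f10 _ Dx) (f12 _ Dx).
rewrite /integral.
have -> : (f1 \_ D)^\- = (f2 \_ D)^\-.
  apply/funext => x; rewrite /patch !funenegE; case: ifP => // /set_mem Dx.
  have h1 := f10 _ Dx; have h2 := f20 _ Dx.
  rewrite !max_r //; rewrite leeNl oppe0 //.
apply: leeB => //.
apply: le_ereal_sup => _ [h /= hle <-]; exists h => //= x.
apply: (le_trans (hle x)).
rewrite /patch !funeposE; case: ifP => [/set_mem Dx|_] //.
by apply: le_max2 => //; exact: f12.
Qed.

End H6sec.

Section S.
Variables (d : nat) (R : realType).

Lemma mtnth_itv (i : interval R) (j : 'I_d) :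
  measurable [set x : d.-tuple R | tnth x j \in i].
Proof.
have := measurable_tnth j measurableT (measurable_itv i).
by rewrite setTI.
Qed.

Lemma mcube : measurable (@cube01 d R).
Proof.
have -> : @cube01 d R = \bigcap_(i in [set: 'I_d]) [set x | tnth x i \in `[0, 1]].
  apply/seteqP; split => x /=.
    by move=> h i _ /=; rewrite in_itv /= h.
  by move=> h i; have := h i I; rewrite /= in_itv.
apply: fin_bigcap_measurable; first exact: finite_finset.
move=> i _; exact: mtnth_itv.
Qed.

Lemma mpath (A : eqType) (p : seq A) (Q : A -> set (d.-tuple R)) :
  (forall e, measurable (Q e)) -> measurable [set x | forall e, e \in p -> Q e x].
Proof.
move=> mQ; elim: p => [|e0 p IH].
  have -> : [set x : d.-tuple R | forall e, e \in [::] -> Q e x] = setT.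
    by apply/seteqP; split => x //= _ e; rewrite in_nil.
  exact: measurableT.
have -> : [set x | forall e, e \in e0 :: p -> Q e x] =
   Q e0 `&` [set x | forall e, e \in p -> Q e x].
  apply/seteqP; split => x /=.
    move=> h; split; first by apply: h; rewrite mem_head.
    by move=> e ep; apply: h; rewrite in_cons ep orbT.
  by move=> [h1 h2] e; rewrite in_cons => /orP[/eqP->|/h2].
exact: measurableI.
Qed.

Lemma mleaf (t : tree d R) (k' : 'I_(nleaves t)) : measurable (leaf_cell k').
Proof.
rewrite /leaf_cell.
have -> : [set x : d.-tuple R | @cube01 d R x /\ forall e, e \in path_of k' ->
       if e.2 then e.1.2.2 <= tnth x e.1.2.1 else tnth x e.1.2.1 < e.1.2.2] =
    @cube01 d R `&` [set x | forall e, e \in path_of k' ->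
      [set y : d.-tuple R | tnth y e.1.2.1 \in
         (if e.2 then `[e.1.2.2, +oo[ else `]-oo, e.1.2.2[)%R] x].
  apply/seteqP; split => x /= [h1 h2]; split => // e /h2;
    by case: e.2; rewrite in_itv /= ?andbT.
apply: measurableI; first exact: mcube.
apply: mpath => e; exact: mtnth_itv.
Qed.

Lemma mslabs (t : tree d R) (dl : R) : measurable (slabs t dl).
Proof.
have -> : slabs t dl = \bigcup_(k in [set: 'I_(nsplits t)])
    [set x | tnth x (split_of k).1 \in `](split_of k).2 - dl, (split_of k).2 + dl[].
  apply/seteqP; split => x /=.
    by move=> [k hk]; exists k => //=; rewrite in_itv /= -ltr_distl.
  by move=> [k _]; rewrite /= in_itv /= -ltr_distl => hk; exists k.
apply: fin_bigcup_measurable; first exact: finite_finset.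
move=> i _; exact: mtnth_itv.
Qed.
End S.

Section S.
Variables (d : nat) (R : realType).

Definition slab1 (s : 'I_d * R) (dl : R) : set (d.-tuple R) :=
  [set x | `|tnth x s.1 - s.2| < dl].

Lemma mslab1 s dl : measurable (slab1 s dl).
Proof.
have -> : slab1 s dl = [set x | tnth x s.1 \in `]s.2 - dl, s.2 + dl[].
  apply/seteqP; split => x; rewrite /slab1 /= in_itv /=; by rewrite (ltr_distl (tnth x s.1)). 
exact: mtnth_itv.
Qed.

Lemma mbox (a b : d.-tuple R) :
  measurable [set x : d.-tuple R | forall i, tnth a i <= tnth x i <= tnth b i].
Proof.
have -> : [set x : d.-tuple R | forall i, tnth a i <= tnth x i <= tnth b i] =
  \bigcap_(i in [set: 'I_d]) [set x | tnth x i \in `[tnth a i, tnth b i]].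
  apply/seteqP; split => x /=.
    by move=> h i _ /=; rewrite in_itv /= h.
  by move=> h i; have := h i I; rewrite /= in_itv.
apply: fin_bigcap_measurable; first exact: finite_finset.
move=> i _; exact: mtnth_itv.
Qed.

Lemma slab_measure (dO : measure_display) (O : measurableType dO)
  (P0 : probability O R) (X : {RV P0 >-> d.-tuple R}) s (dl : R) :
  uniform_cube P0 X -> 0 < dl ->
  (distribution P0 X (slab1 s dl `&` @cube01 d R) <= (2 * dl)%:E)%E.
Proof.
move=> hU dl0.
set lo := Num.max 0 (s.2 - dl); set hi := Num.min 1 (s.2 + dl).
have lo0 : 0 <= lo by rewrite le_max lexx.
have hi1 : hi <= 1 by rewrite ge_min lexx.
have hl : hi - lo <= 2 * dl.
  have : s.2 - dl <= lo by rewrite le_max lexx orbT.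
  have : hi <= s.2 + dl by rewrite ge_min lexx orbT.
  lra.
case: (lerP lo hi) => hlh; last first.
  have -> : slab1 s dl `&` @cube01 d R = set0.
    apply/seteqP; split => x //= [h1 h2].
    move: h1; rewrite /slab1 /= (ltr_distl (tnth x s.1)) => /andP[h3 h4].
    have /andP[c0 c1] := h2 s.1.
    have : lo <= tnth x s.1 by rewrite ge_max c0 /=; lra.
    have : tnth x s.1 <= hi by rewrite le_min c1 /=; lra.
    lra.
  by rewrite measure0 lee_fin; lra.
pose a := [tuple (if i == s.1 then lo else 0) | i < d].
pose b := [tuple (if i == s.1 then hi else 1) | i < d].
have sub : slab1 s dl `&` @cube01 d R `<=`
   [set x : d.-tuple R | forall i, tnth a i <= tnth x i <= tnth b i].
  move=> x [h1 h2] i; rewrite !tnth_mktuple.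
  case: eqP => [->|_]; last by have /andP[c0 c1] := h2 i; rewrite c0 c1.
  have /andP[c0 c1] := h2 s.1.
  move: h1; rewrite /slab1 /= (ltr_distl (tnth x s.1)) => /andP[h3 h4].
  rewrite ge_max le_min c0 c1 /=; apply/andP; split; lra.
apply: (le_trans (le_measure _ _ _ sub)).
- by rewrite inE; apply: measurableI; [exact: mslab1|exact: mcube].
- by rewrite inE; exact: mbox.
change (P0 (X @^-1` [set x | (forall i : 'I_d, (tnth a i <= tnth x i <= tnth b i)%R)]) <= (2 * dl)%:E)%E.
rewrite hU; last first.
  move=> i; rewrite !tnth_mktuple; case: eqP => _; lra.
rewrite lee_fin (bigD1 s.1) //= !tnth_mktuple eqxx big1 ?mulr1 //.
by move=> i /negbTE ne; rewrite !tnth_mktuple ne subr0.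
Qed.
End S.
Arguments slab1 {d R} s dl.

Lemma cond_exp_bound (R : realType) (dO : measure_display) (O : measurableType dO)
  (P0 : probability O R) (Y : {RV P0 >-> R}) (A : set O) (M : R) :
  measurable A -> 0 <= M -> {ae P0, forall w, `|Y w| <= M} ->
  `|cond_exp P0 Y A| <= M.
Proof.
move=> mA M0 hY.
have [p hp] : exists p, P0 A = p%:E.
  have h0 : (0 <= P0 A)%E := measure_ge0 _ _.
  have h1 : (P0 A <= 1)%E := probability_le1 _ mA.
  move: h0 h1; case: (P0 A) => [r| |] //; by exists r.
have p0 : 0 <= p by rewrite -lee_fin -hp measure_ge0.
have mY : measurable_fun A (fun w => (Y w)%:E).
  apply/measurable_EFinP; apply: measurable_funS (measurable_funPT Y) => //.
have hb : (`| \int[P0]_(w in A) (Y w)%:E | <= (M * p)%:E)%E.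
  apply: (le_trans (le_abse_integral _ _ mY)) => //.
  rewrite EFinM -hp.
  apply: integral_le_bound => //.
  by apply: filterS hY => w hw _ /=; rewrite lee_fin.
move: hb; rewrite /cond_exp hp /=.
case: (\int[P0]_(w in A) (Y w)%:E)%E => [r| |] //= hb.
have {}hb : `|r| <= M * p by rewrite -lee_fin.
have [->|pn0] := eqVneq p 0; first by rewrite invr0 mulr0 normr0.
have pp : 0 < p by rewrite lt_neqAle eq_sym pn0 p0.
rewrite normrM normfV (gtr0_norm pp) ler_pdivrMr //.
Qed.

Section S.
Variable R : realType.

Lemma eps_eq (g : R) : 0 < g -> 2 * expR (- (2 * g * (ln g / g))) = 2 / g ^+ 2.
Proof.
move=> g0.
have -> : 2 * g * (ln g / g) = ln g + ln g by field; apply/lt0r_neq0.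
rewrite opprD expRD !expRN lnK ?posrE //.
by rewrite expr2 invfM mulrA.
Qed.

Lemma final_real (Kr g1 g2 M m : R) :
  1 <= Kr -> 0 <= m <= Kr -> expR 1 <= g1 -> 4 <= g2 -> 0 <= M ->
  Kr ^+ 4 * g2 ^+ 2 * ln g1 / g1 <= 1 ->
  m * (2 * expR (- (2 * g1 * (ln g1 / g1)))) <= 4^-1 /\
  (Kr * M) ^+ 2 * (m * (2 * (ln g1 / g1))) +
  (Kr * M * expR (- (2 * g2 * (2^-1 - m * (2 * expR (- (2 * g1 * (ln g1 / g1))))))))
    ^+ 2 <=
  2 * M ^+ 2 * (Kr ^+ 4 * g2 ^+ 2 * ln g1 / g1) +
  expR 4 * M ^+ 2 * (Kr ^+ 2 * expR (- (2 * g2))).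
Proof.
move=> K1 /andP[m0 mK] g1e g24 M0 hQ.
have e2 : 2 <= expR (1 : R) by have := expR_ge1Dx (1 : R); lra.
have g10 : 0 < g1 by lra.
have L1 : 1 <= ln g1.
  by rewrite -[1](@expRK R) ler_ln ?posrE ?expR_gt0.
rewrite eps_eq //.
set L := ln g1 in L1 hQ *.
have hP : Kr ^+ 4 * g2 ^+ 2 * L <= g1.
  by move: hQ; rewrite ler_pdivrMr // mul1r.
have K3 : 1 <= Kr ^+ 3 by rewrite exprn_ege1.
have KgP : Kr * g2 <= Kr ^+ 4 * g2 ^+ 2 * L.
  have h1 : Kr * g2 <= Kr ^+ 4 * g2 ^+ 2.
    have k4 : Kr <= Kr ^+ 4 by rewrite (exprSr Kr 3); nra.
    have g22 : g2 <= g2 ^+ 2 by rewrite expr2; nra.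
    apply: ler_pM => //; lra.
  have p0 : 0 <= Kr ^+ 4 * g2 ^+ 2.
    by apply: mulr_ge0; [apply: exprn_ge0|apply: sqr_ge0]; lra.
  nra.
have Kg : Kr * g2 <= g1 by lra.
have ginv : 0 < g1^-1 by rewrite invr_gt0.
have me : m * (2 / g1 ^+ 2) <= 2 * Kr * g1^-1 * g1^-1.
  rewrite expr2 invfM; have : 0 <= g1^-1 * g1^-1 by nra. nra.
have gm : g2 * (m * (2 / g1 ^+ 2)) <= 1.
  have : g2 * (2 * Kr * g1^-1 * g1^-1) <= 2 * g1^-1.
    have : Kr * g2 * g1^-1 <= 1.
      by rewrite ler_pdivrMr // mul1r.
    have : g1^-1 <= 2^-1.
      by rewrite lef_pV2 ?posrE //; lra.
    nra.
  have : 2 * g1^-1 <= 1.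
    have : g1^-1 <= 2^-1 by rewrite lef_pV2 ?posrE //; lra.
    lra.
  nra.
split.
  have : g2 * (m * (2 / g1 ^+ 2)) <= 1 := gm.
  have : 0 <= m * (2 / g1 ^+ 2) by apply: mulr_ge0 => //; apply: divr_ge0 => //; apply: sqr_ge0.
  nra.
set me2 := m * (2 / g1 ^+ 2) in me gm *.
have hB : (Kr * M * expR (- (2 * g2 * (2^-1 - me2)))) ^+ 2 <=
     expR 4 * M ^+ 2 * (Kr ^+ 2 * expR (- (2 * g2))).
  rewrite exprMn -expRM_natl.
  have -> : (2%:R * - (2 * g2 * (2^-1 - me2))) = - (2 * g2) + 4 * (g2 * me2).
    rewrite (_ : (2%:R : R) = 2) //; lra.
  rewrite expRD.
  have : expR (4 * (g2 * me2)) <= expR 4.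
    by rewrite ler_expR; lra.
  have : 0 <= (Kr * M) ^+ 2 * expR (- (2 * g2)).
    by apply: mulr_ge0; [apply: sqr_ge0|apply: ltW; apply: expR_gt0].
  rewrite exprMn.
  have : 0 < expR (- (2 * g2)) := expR_gt0 _.
  nra.
have hA : (Kr * M) ^+ 2 * (m * (2 * (L / g1))) <=
   2 * M ^+ 2 * (Kr ^+ 4 * g2 ^+ 2 * L / g1).
  have -> : (Kr * M) ^+ 2 * (m * (2 * (L / g1))) = (2 * M ^+ 2 * (L / g1)) * (Kr ^+ 2 * m).
    by rewrite exprMn; ring.
  have -> : 2 * M ^+ 2 * (Kr ^+ 4 * g2 ^+ 2 * L / g1) = (2 * M ^+ 2 * (L / g1)) * (Kr ^+ 4 * g2 ^+ 2).
    by ring.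
  have hK : Kr ^+ 2 * m <= Kr ^+ 4 * g2 ^+ 2.
    have : Kr ^+ 2 * m <= Kr ^+ 2 * Kr by rewrite ler_pM2l //; nra.
    have : Kr ^+ 2 * Kr <= Kr ^+ 4 * g2 ^+ 2.
      have a1 : Kr ^+ 2 * Kr = Kr ^+ 3 by rewrite -exprSr.
      have a2 : Kr ^+ 3 <= Kr ^+ 4 by rewrite (exprS Kr 3); nra.
      have g21 : 1 <= g2 ^+ 2 by rewrite expr2; nra.
      have a3 : Kr ^+ 4 <= Kr ^+ 4 * g2 ^+ 2.
        rewrite -[X in X <= _]mulr1; apply: ler_pM => //; nra.
      lra.
    lra.
  apply: ler_wpM2l => //.
  apply: mulr_ge0; [apply: mulr_ge0 => //; apply: sqr_ge0|apply: divr_ge0; lra].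
lra.
Qed.
End S.

Lemma size_lpaths (d : nat) (R : realType) (t : tree d R) off :
  size (lpaths t off) = (size (splits t)).+1.
Proof.
elim: t off => [|j a l IHl r IHr] off //=.
by rewrite size_cat !size_map IHl IHr size_cat addSn addnS.
Qed.

Lemma nleavesE (d : nat) (R : realType) (t : tree d R) :
  nleaves t = (nsplits t).+1.
Proof. exact: size_lpaths. Qed.

Lemma integral_bound (d : nat) (R : realType) (dO : measure_display)
  (O : measurableType dO) (P0 : probability O R) (X : {RV P0 >-> d.-tuple R})
  (t : tree d R) (A B dl : R) :
  uniform_cube P0 X -> 0 <= A -> 0 <= B -> 0 < dl ->
  (\int[distribution P0 X]_(x in @cube01 d R)
     (\sum_(k < nsplits t) (A * \1_(slab1 (split_of k) dl) x)%:E + B%:E)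
   <= (A * ((nsplits t)%:R * (2 * dl)) + B)%:E)%E.
Proof.
move=> hU A0 B0 dl0.
have mc := @mcube d R.
have mg : forall k : 'I_(nsplits t),
    measurable_fun (@cube01 d R) (fun x => (A * \1_(slab1 (split_of k) dl) x)%:E).
  move=> k; apply/measurable_EFinP; apply: measurable_funM.
    exact: measurable_cst.
  by apply: measurable_indic; exact: mslab1.
have g0 : forall (k : 'I_(nsplits t)) x, @cube01 d R x ->
    (0 <= (A * \1_(slab1 (split_of k) dl) x)%:E)%E.
  by move=> k x _; rewrite lee_fin; apply: mulr_ge0.
rewrite ge0_integralD //; last 2 first.
- by move=> x cx; apply: sume_ge0 => k _; exact: g0.
- by apply: emeasurable_sum => k; exact: mg.
rewrite ge0_integral_sum //.
rewrite integral_cst // EFinD; apply: leeD; last first.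
  have := probability_le1 (distribution P0 X) mc.
  move=> h; rewrite -[X in (_ <= X)%E]mule1; apply: lee_wpmul2l => //.
have -> : (A * ((nsplits t)%:R * (2 * dl)))%:E =
   (\sum_(k < nsplits t) (A * (2 * dl))%:E)%E.
  by rewrite sumEFin sumr_const card_ord mulr_natl mulrnAr.
apply: lee_sum => k _.
have -> : (\int[distribution P0 X]_(x in @cube01 d R)
      (A * \1_(slab1 (split_of k) dl) x)%:E =
    A%:E * \int[distribution P0 X]_(x in @cube01 d R) (\1_(slab1 (split_of k) dl) x)%:E)%E.
  rewrite -ge0_integralZl_EFin //.
  by apply/measurable_EFinP; apply: measurable_indic; exact: mslab1.
rewrite integral_indic //; last exact: mslab1.
rewrite EFinM; apply: lee_wpmul2l; first by rewrite lee_fin.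
exact: slab_measure.
Qed.

Lemma indic_slabs (d : nat) (R : realType) (t : tree d R) (dl : R) x :
  \1_(slabs t dl) x <= \sum_(k < nsplits t) \1_(slab1 (split_of k) dl) x :> R.
Proof.
have h0 : forall k : 'I_(nsplits t), 0 <= \1_(slab1 (split_of k) dl) x :> R.
  by move=> k; rewrite /indic; case: (_ \in _).
rewrite {1}/indic; case: (boolP (x \in slabs t dl)) => hx /=; last first.
  by apply: sumr_ge0 => k _.
move: hx; rewrite inE => -[k hk].
rewrite (bigD1 k) //= {1}/indic (_ : x \in slab1 (split_of k) dl) ?mem_set //=.
by rewrite lerDl; apply: sumr_ge0 => i _.
Qed.

Lemma err_bound (d : nat) (R : realType) (dO : measure_display)
  (O : measurableType dO) (P0 : probability O R) (X : {RV P0 >-> d.-tuple R})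
  (Y : {RV P0 >-> R}) (t : tree d R) (M g1 g2 : R) :
  uniform_cube P0 X -> 0 <= M ->
  (forall k', `|leaf_values P0 X Y t k'| <= M) ->
  1 <= (nleaves t)%:R :> R -> expR 1 <= g1 -> 4 <= g2 ->
  (nleaves t)%:R ^+ 4 * g2 ^+ 2 * ln g1 / g1 <= 1 ->
  (\int[distribution P0 X]_(x in @cube01 d R)
      ((f_star g1 g2 (leaf_values P0 X Y t) x - t_star (leaf_values P0 X Y t) x) ^+ 2)%:E
   <= (2 * M ^+ 2 * ((nleaves t)%:R ^+ 4 * g2 ^+ 2 * ln g1 / g1) +
      expR 4 * M ^+ 2 * ((nleaves t)%:R ^+ 2 * expR (- (2 * g2))))%:E)%E.
Proof.
move=> hU M0 hc K1 g1e g24 hQ.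
set Kr := (nleaves t)%:R in K1 hQ *.
set m := (nsplits t)%:R : R.
have mK : 0 <= m <= Kr.
  by rewrite /m /Kr nleavesE ler0n /= ler_nat.
have e2 : 2 <= expR (1 : R) by have := expR_ge1Dx (1 : R); lra.
have g10 : 0 < g1 by lra.
have L1 : 1 <= ln g1.
  by rewrite -[1](@expRK R) ler_ln ?posrE ?expR_gt0.
have dl0 : 0 < ln g1 / g1 by apply: divr_gt0; lra.
have [hr hfin] := @final_real R _ _ _ _ _ K1 mK g1e g24 M0 hQ.
set dl := ln g1 / g1 in dl0 hr hfin.
set A := (Kr * M) ^+ 2.
set B := (Kr * M * expR (- (2 * g2 * (2^-1 - m * (2 * expR (- (2 * g1 * dl))))))) ^+ 2.
have H1 : (\int[distribution P0 X]_(x in @cube01 d R)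
      ((f_star g1 g2 (leaf_values P0 X Y t) x - t_star (leaf_values P0 X Y t) x) ^+ 2)%:E
   <= \int[distribution P0 X]_(x in @cube01 d R)
     (\sum_(k < nsplits t) (A * \1_(slab1 (split_of k) dl) x)%:E + B%:E))%E.
  apply: le_integral_nm => x _; first by rewrite lee_fin sqr_ge0.
  rewrite sumEFin -EFinD lee_fin.
  apply: (le_trans (@pointwise d R t (leaf_values P0 X Y t) M g1 g2 dl x M0 hc _ _ hr)); [lra|lra|].
  rewrite -/Kr -/m -/A -/B lerD2r -mulr_sumr ler_wpM2l //; first exact: sqr_ge0.
  exact: indic_slabs.
apply: (le_trans H1).
apply: (le_trans (@integral_bound d R dO O P0 X t A B dl hU _ _ dl0)); [exact: sqr_ge0|exact: sqr_ge0|].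
by rewrite lee_fin.
Qed.

Module Aux.
Import numFieldNormedType.Exports.
Lemma cvg_scale0 (R : realType) (c : R) (f : nat -> R) :
  f n @[n --> \oo] --> 0 -> c * f n @[n --> \oo] --> 0.
Proof.
move=> hf; rewrite (_ : 0 = c * 0); last by rewrite mulr0.
by apply: cvgM => //; exact: cvg_cst.
Qed.
End Aux.

Theorem proposition2 (d : nat) (R : realType)
  (d0 : measure_display) (O0 : measurableType d0) (P0 : probability O0 R)
  (X : {RV P0 >-> d.-tuple R}) (Y : {RV P0 >-> R})
  (dO : measure_display) (Om : measurableType dO) (P : probability Om R)
  (K : nat -> nat) (g1 g2 : nat -> R) (T : nat -> Om -> tree d R) :
  uniform_cube P0 X ->
  ess_bounded P0 Y ->
  (forall n w, nleaves (T n w) = K n) ->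
  ((K n)%:R : R) @[n --> \oo] --> +oo ->
  g1 n @[n --> \oo] --> +oo ->
  g2 n @[n --> \oo] --> +oo ->
  ((K n)%:R ^+ 2 * expR (- (2 * g2 n))) @[n --> \oo] --> 0 ->
  ((K n)%:R ^+ 4 * g2 n ^+ 2 * ln (g1 n) / g1 n) @[n --> \oo] --> 0 ->
  let err (n : nat) (w : Om) : \bar R :=
    (\int[distribution P0 X]_(x in @cube01 d R)
      ((f_star (g1 n) (g2 n) (leaf_values P0 X Y (T n w)) x
        - t_star (leaf_values P0 X Y (T n w)) x) ^+ 2)%:E)%E in
  (forall n, measurable_fun [set: Om] (fun w => err n w : \bar R)) ->
  (fun n => (\int[P]_w err n w)%E) @ \oo --> 0%E.
Proof.
move=> hU [M1 hM1] hK hKi hg1 hg2 hK2 hK4 err merr.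
set M := Num.max M1 0.
have M0 : 0 <= M by rewrite le_max lexx orbT.
have hM : {ae P0, forall w, `|Y w| <= M}.
  by apply: filterS hM1 => w hw; rewrite le_max hw.
have hc : forall n w k', `|leaf_values P0 X Y (T n w) k'| <= M.
  move=> n w k'; apply: cond_exp_bound => //.
  by apply: measurable_funPTI; exact: mleaf.
pose Q4 n := (K n)%:R ^+ 4 * g2 n ^+ 2 * ln (g1 n) / g1 n.
pose Q2 n := (K n)%:R ^+ 2 * expR (- (2 * g2 n)) : R.
pose up n := 2 * M ^+ 2 * Q4 n + expR 4 * M ^+ 2 * Q2 n.
have hup : up n @[n --> \oo] --> 0.
  rewrite -[0]addr0.
  by apply: cvgD; apply: Aux.cvg_scale0.
have c1 : \forall n \near \oo, expR 1 <= g1 n by move/cvgryPge: hg1; apply.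
have c2 : \forall n \near \oo, 4 <= g2 n by move/cvgryPge: hg2; apply.
have c3 : \forall n \near \oo, 1 <= (K n)%:R :> R by move/cvgryPge: hKi; apply.
have c4 : \forall n \near \oo, Q4 n <= 1 by move/cvgr_le: hK4; apply; exact: ltr01.
apply: (@squeeze_cvge _ _ _ _ (fun _ => 0%E) _ (fun n => (up n)%:E)); last 2 first.
- exact: cvg_cst.
- by apply/fine_cvgP; split; [exact: nearW|exact: hup].
near=> n.
have hb : forall w, (err n w <= (up n)%:E)%E.
  move=> w; rewrite /err /up /Q4 /Q2 -(hK n w).
  apply: err_bound => //; rewrite ?hK; near: n; [exact: c3|exact: c1|exact: c2|exact: c4].
apply/andP; split.
  apply: integral_ge0 => w _; apply: integral_ge0 => x _; rewrite lee_fin; exact: sqr_ge0.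
apply: (le_trans (@le_integral_nm _ _ _ P setT _ (fun _ => (up n)%:E) _ _)).
- by move=> w _; rewrite /err; apply: integral_ge0 => x _; rewrite lee_fin; exact: sqr_ge0.
- by move=> w _; exact: hb.
- have h := integral_cst P measurableT ((up n)%:E); rewrite /cst in h.
  rewrite h -[X in (_ <= X)%E]mule1; apply: lee_wpmul2l; last exact: probability_le1.
  rewrite lee_fin /up /Q4 /Q2.
  have g1e : expR 1 <= g1 n by near: n; exact: c1.
  have e1 : 1 <= expR (1 : R) by have := expR_ge1Dx (1 : R); lra.
  have l0 : 0 <= ln (g1 n) by apply: ln_ge0; lra.
  have Kp : forall k, 0 <= ((K n)%:R : R) ^+ k by move=> k; apply: exprn_ge0.
  apply: addr_ge0; apply: mulr_ge0.
  - by apply: mulr_ge0; [lra|apply: sqr_ge0].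
  - apply: divr_ge0; last lra.
    by apply: mulr_ge0 => //; apply: mulr_ge0; [apply: Kp|apply: sqr_ge0].
  - by apply: mulr_ge0; [apply: ltW; apply: expR_gt0|apply: sqr_ge0].
  - by apply: mulr_ge0; [apply: Kp|apply: ltW; apply: expR_gt0].
Unshelve. all: end_near.
Qed.
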